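(* In the setting of the context: (i) if $A$ is any frontier, then $\sum_{\mathbf{w}\in A}\Pr_{\theta,\phi}(\mathbf{w}\mid\mathbf{z}_{\mathrm{pre}})=1$. (ii) Run top-$k$ constrained beam search ($k$-CBS) with beam width $B$; let $F$ be the set of continuations $\mathbf{x}$ of the output pairs $(\mathbf{z}_{\mathrm{pre}}\Vert\mathbf{x},\ell)\in C_T$, and let $R_{\mathrm{prune}}$ be the set of partial continuations $\mathbf{u}$ (of lengths $t<T$) such that a pair $(\mathbf{z}_{\mathrm{pre}}\Vert\mathbf{u},\ell)$ was in $C_t$ but was removed at step $t$ (either because its history ends in EOS or because it was not among the $B$ retained pairs). Then $F\cup R_{\mathrm{prune}}$ is a frontier, and $$\sum_{\mathbf{x}\in F}\Pr_{\theta,\phi}(\mathbf{x}\mid\mathbf{z}_{\mathrm{pre}})+\sum_{\mathbf{u}\in R_{\mathrm{prune}}}\Pr_{\theta,\phi}(\mathbf{u}\mid\mathbf{z}_{\mathrm{pre}})=1.$$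
   Context: Let $\mathbb{V}$ be a finite vocabulary containing a designated end-of-sequence token EOS. A language model $\theta$ assigns to every finite token sequence (history) $\mathbf{h}$ a probability distribution $\Pr_\theta(\cdot\mid\mathbf{h})$ on $\mathbb{V}$ with $\Pr_\theta(v\mid\mathbf{h})>0$ for all $v$. For an integer $k\ge1$ and a history $\mathbf{h}$, let $S(\mathbf{h})\subseteq\mathbb{V}$ be the set of $k$ tokens with the largest values of $\Pr_\theta(\cdot\mid\mathbf{h})$ (ties broken by a fixed deterministic rule). The top-$k$ decoding distribution is $\Pr_{\theta,\phi}(v\mid\mathbf{h})=\Pr_\theta(v\mid\mathbf{h})/\sum_{u\in S(\mathbf{h})}\Pr_\theta(u\mid\mathbf{h})$ for $v\in S(\mathbf{h})$ and $0$ otherwise. Fix a prefix $\mathbf{z}_{\mathrm{pre}}$ and $T\ge1$. For a partial continuation $\mathbf{u}=(u_1,\dots,u_t)$, $0\le t\le T$, $\Pr_{\theta,\phi}(\mathbf{u}\mid\mathbf{z}_{\mathrm{pre}})=\prod_{s=1}^t\Pr_{\theta,\phi}(u_s\mid\mathbf{z}_{\mathrm{pre}}\Vert u_{1:s-1})$ ($\Vert$ is concatenation). Call $\mathbf{u}$ a node of the top-$k$ tree if $u_s\in S(\mathbf{z}_{\mathrm{pre}}\Vert u_{1:s-1})$ for all $s\le t$. A frontier is a set $A$ of nodes (of lengths at most $T$) such that no element of $A$ is a proper initial segment of another element of $A$, and every node of length $T$ has exactly one element of $A$ as an initial segment. $k$-CBS with beam width $B$: set $L_0=\{(\mathbf{z}_{\mathrm{pre}},0)\}$.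 For $t=1,\dots,T$: let $C_t=\{(\mathbf{h}\Vert v,\ \ell+\log\Pr_{\theta,\phi}(v\mid\mathbf{h})):(\mathbf{h},\ell)\in L_{t-1},\ v\in S(\mathbf{h})\}$. If $t=T$, output $C_T$. If $t<T$, delete from $C_t$ every pair whose history ends in EOS, and let $L_t$ be the (at most) $B$ pairs of $C_t$ with the largest second coordinate (deterministic tie-breaking). *)

(* Defs.v *)
From HB Require Import structures.
From mathcomp Require Import all_boot all_order all_algebra.
From mathcomp Require Import reals exp.
Set Implicit Arguments. Unset Strict Implicit. Unset Printing Implicit Defensive.
Import Order.TTheory GRing.Theory Num.Theory.
Local Open Scope ring_scope.

Section TopK.
Variables (V : finType) (R : realType).

Definition is_lm (p : seq V -> V -> R) :=
  forall h, (forall v, 0 < p h v) /\ \sum_(v : V) p h v = 1.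

(* S is a top-k selection for p: S h consists of k tokens whose probabilities
   are at least those of all the other tokens (ties broken by S itself, which is
   an arbitrary but fixed deterministic rule). *)
Definition is_topk_sel (k : nat) (p : seq V -> V -> R) (S : seq V -> {set V}) :=
  forall h, #|S h| = k /\
    (forall v u, v \in S h -> u \notin S h -> p h u <= p h v).

Definition topk_dist (p : seq V -> V -> R) (S : seq V -> {set V})
    (h : seq V) (v : V) : R :=
  if v \in S h then p h v / \sum_(u in S h) p h u else 0.

(* Pr_{theta,phi}(u | zpre) ; [eos] is only a (irrelevant) default for nth *)
Definition cont_prob (eos : V) p S (zpre u : seq V) : R :=
  \prod_(s < size u) topk_dist p S (zpre ++ take s u) (nth eos u s).

Definition is_node (eos : V) (S : seq V -> {set V}) (zpre u : seq V) : Prop :=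
  forall s, (s < size u)%N -> nth eos u s \in S (zpre ++ take s u).

Definition is_frontier (eos : V) S (zpre : seq V) (T : nat) (A : seq (seq V)) :=
  [/\ uniq A,
      (forall w, w \in A -> is_node eos S zpre w /\ (size w <= T)%N),
      (forall w1 w2, w1 \in A -> w2 \in A -> ~ (prefix w1 w2 /\ w1 != w2)) &
      (forall u, is_node eos S zpre u -> size u = T ->
         count (fun w => prefix w u) A = 1%N)].

Definition is_beam_sel (B : nat) (sel : seq (seq V * R) -> seq (seq V * R)) :=
  forall c, uniq c ->
    [/\ uniq (sel c), {subset sel c <= c}, size (sel c) = minn B (size c) &
        forall x y, x \in sel c -> y \in c -> y \notin sel c -> y.2 <= x.2].

Definition ends_eos (eos : V) (h : seq V) : bool :=
  if h is a :: h' then last a h' == eos else false.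

Definition expand p S (L : seq (seq V * R)) : seq (seq V * R) :=
  [seq (rcons x.1 v, x.2 + ln (topk_dist p S x.1 v)) | x <- L, v <- enum (S x.1)].

(* (C_t, L_t) for t >= 0 (C_0 is unused, set to [::]) *)
Fixpoint kcbs (eos : V) p S sel (zpre : seq V) (t : nat)
  : seq (seq V * R) * seq (seq V * R) :=
  match t with
  | 0 => ([::], [:: (zpre, 0)])
  | t'.+1 =>
      let C := expand p S (kcbs eos p S sel zpre t').2 in
      (C, sel [seq x <- C | ~~ ends_eos eos x.1])
  end.

Definition kcbs_C eos p S sel zpre t := (kcbs eos p S sel zpre t).1.
Definition kcbs_L eos p S sel zpre t := (kcbs eos p S sel zpre t).2.

Definition kcbs_F eos p S sel (zpre : seq V) (T : nat) : seq (seq V) :=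
  [seq drop (size zpre) x.1 | x <- kcbs_C eos p S sel zpre T].

Definition kcbs_Rprune eos p S sel (zpre : seq V) (T : nat) : seq (seq V) :=
  flatten [seq [seq drop (size zpre) x.1 |
                 x <- kcbs_C eos p S sel zpre t
                 & x \notin kcbs_L eos p S sel zpre t] | t <- iota 1 T.-1].

End TopK.

(* Main.v *)
Require Import Defs.
From HB Require Import structures.
From mathcomp Require Import all_boot all_order all_algebra.
From mathcomp Require Import reals exp.
Import Order.TTheory GRing.Theory Num.Theory.
Local Open Scope ring_scope.

Fixpoint seqs (V : finType) (n : nat) : seq (seq V) :=
  match n with 0 => [:: [::]] | n'.+1 => [seq v :: w | v <- enum V, w <- seqs V n'] end.

Lemma mem_seqs (V : finType) n u : u \in seqs V n -> size u = n.
Proof.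
elim: n u => [|n IH] u /=; first by rewrite inE => /eqP->.
by case/allpairsPdep=> v [w [_ Hw ->]] /=; rewrite (IH _ Hw).
Qed.

Lemma sum_seqs_prefix (V : finType) (R : realType) (f : seq V -> R) w n :
  (size w <= n)%N ->
  \sum_(u <- seqs V n | prefix w u) f u = \sum_(u <- seqs V (n - size w)) f (w ++ u).
Proof.
elim: w n f => [|a w IH] n f /=.
  by move=> _; rewrite subn0; apply: eq_bigl => u; case: u.
case: n => [|n] //; rewrite ltnS => Hn /=.
rewrite big_mkcond big_allpairs_dep /= (bigD1_seq a) ?mem_enum ?enum_uniq //=.
rewrite [X in _ + X]big1_seq ?addr0; last first.
  by move=> v /andP [Hv _]; apply: big1 => u _; rewrite eq_sym (negbTE Hv).
rewrite eqxx /= -big_mkcond (IH _ (fun u => f (a :: u))) //.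
Qed.

Lemma cont_prob_rcons (V : finType) (R : realType) (eos : V) p S zpre w v :
  @cont_prob V R eos p S zpre (rcons w v) = cont_prob eos p S zpre w * topk_dist p S (zpre ++ w) v.
Proof.
rewrite /cont_prob size_rcons big_ord_recr /=; congr (_ * _).
  apply: eq_bigr => i _; rewrite /= nth_rcons (ltn_ord i) -cats1 takel_cat //.
  exact: ltnW.
by rewrite nth_rcons ltnn eqxx -cats1 take_size_cat.
Qed.

Lemma topk_sum (V : finType) (R : realType) (p : seq V -> V -> R) k S h :
  is_lm p -> (1 <= k)%N -> is_topk_sel k p S -> \sum_(v : V) topk_dist p S h v = 1.
Proof.
move=> Hlm Hk Hsel; rewrite /topk_dist -big_mkcond /= -mulr_suml divff //.
have [z Hz] : exists z, z \in S h.
  apply/set0Pn; apply/eqP => H0; have [H1 _] := Hsel h.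
  by move: Hk; rewrite -H1 H0 cards0.
rewrite (bigD1 z) //= gt_eqF // ltr_pwDl ?(proj1 (Hlm h)) //.
by apply: sumr_ge0 => i _; apply: ltW; apply: (proj1 (Hlm h)).
Qed.

Lemma sum_ext (V : finType) (R : realType) (eos : V) p k S zpre n w :
  is_lm p -> (1 <= k)%N -> is_topk_sel k p S ->
  \sum_(u <- seqs V n) @cont_prob V R eos p S zpre (w ++ u) = cont_prob eos p S zpre w.
Proof.
move=> Hlm Hk Hsel; elim: n w => [|n IH] w /=; first by rewrite big_seq1 cats0.
rewrite big_allpairs_dep /=.
under eq_bigr => v _ do under eq_bigr => u _ do rewrite -cat_rcons.
under eq_bigr => v _ do rewrite IH cont_prob_rcons.
by rewrite -mulr_sumr big_enum /= (@topk_sum _ _ _ _ _ _ Hlm Hk Hsel) mulr1.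
Qed.

Lemma cp_node (V : finType) (R : realType) (eos : V) p S zpre u :
  @cont_prob V R eos p S zpre u != 0 -> is_node eos S zpre u.
Proof.
move=> H s Hs; apply/negPn/negP => Hn; move: H; apply/negP; rewrite negbK.
by rewrite /cont_prob (bigD1 (Ordinal Hs)) //= /topk_dist (negbTE Hn) mul0r.
Qed.

Lemma frontier_sum (V : finType) (R : realType) (eos : V) p k S zpre T A :
  is_lm p -> (1 <= k)%N -> is_topk_sel k p S -> is_frontier eos S zpre T A ->
  \sum_(w <- A) @cont_prob V R eos p S zpre w = 1.
Proof.
move=> Hlm Hk Hsel [HuA Hnode Hpre Hcnt].
have E1 : 1 = \sum_(u <- seqs V T) @cont_prob V R eos p S zpre u.
  by rewrite (@sum_ext _ _ _ _ _ _ _ _ [::] Hlm Hk Hsel) /cont_prob big_ord0.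
rewrite E1; symmetry.
transitivity (\sum_(u <- seqs V T) \sum_(w <- A | prefix w u) @cont_prob V R eos p S zpre u).
  apply: eq_big_seq => u Hu.
  case: (eqVneq (@cont_prob V R eos p S zpre u) 0) => [->|H]; first by rewrite big1.
  by rewrite big_const_seq (Hcnt u (@cp_node _ _ _ _ _ _ _ H) (@mem_seqs V T u Hu)) /= addr0.
under eq_bigr do rewrite big_mkcond.
rewrite exchange_big /=.
apply: eq_big_seq => w Hw; rewrite -big_mkcond sum_seqs_prefix; last exact: (proj2 (Hnode w Hw)).
exact: (@sum_ext _ _ _ _ _ _ _ _ w Hlm Hk Hsel).
Qed.
Lemma uniq_map_inj (T U : eqType) (f : T -> U) s x y :
  uniq (map f s) -> x \in s -> y \in s -> f x = f y -> x = y.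
Proof.
elim: s => [|a s IH] //= /andP [Ha Hu]; rewrite !inE.
case/orP=> [/eqP->|Hx]; case/orP=> [/eqP->|Hy] //.
- by move=> E; move: Ha; rewrite E map_f.
- by move=> E; move: Ha; rewrite -E map_f.
- exact: IH.
Qed.

Lemma node_rcons (V : finType) (eos : V) S zpre w v :
  is_node eos S zpre w -> v \in S (zpre ++ w) -> is_node eos S zpre (rcons w v).
Proof.
move=> Hw Hv s; rewrite size_rcons ltnS leq_eqVlt => /orP [/eqP->|Hs].
  by rewrite nth_rcons ltnn eqxx -cats1 take_size_cat.
by rewrite nth_rcons Hs -cats1 takel_cat ?(ltnW Hs) //; apply: Hw.
Qed.

Lemma node_take (V : finType) (eos : V) S zpre u n :
  is_node eos S zpre u -> is_node eos S zpre (take n u).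
Proof.
move=> Hu s; rewrite size_take_min leq_min => /andP [Hn Hs].
rewrite nth_take // take_takel ?(ltnW Hn) //; exact: Hu.
Qed.

Lemma node_last (V : finType) (eos : V) S zpre u t :
  is_node eos S zpre u -> size u = t.+1 ->
  u = rcons (take t u) (nth eos u t) /\ nth eos u t \in S (zpre ++ take t u).
Proof.
move=> Hu Hs; split; last by apply: Hu; rewrite Hs.
apply: (@eq_from_nth _ eos); first by rewrite size_rcons size_take Hs ltnSn.
move=> i; rewrite Hs ltnS leq_eqVlt => /orP [/eqP->|Hi].
  by rewrite nth_rcons size_take Hs ltnSn ltnn eqxx.
by rewrite nth_rcons size_take Hs ltnSn Hi nth_take.
Qed.

Definition dz (V : finType) (R : Type) (zpre : seq V) (x : seq V * R) := drop (size zpre) x.1.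
Arguments dz {V R} zpre x.
Definition good (V : finType) (R : Type) (eos : V) S zpre t (x : seq V * R) :=
  [/\ x.1 = zpre ++ dz zpre x, size (dz zpre x) = t & is_node eos S zpre (dz zpre x)].
Arguments good {V R} eos S zpre t x.

Lemma stepC (V : finType) (R : realType) (eos : V) p S (L : seq (seq V * R)) zpre t :
  (forall x, x \in L -> good eos S zpre t x) -> uniq (map (dz zpre) L) ->
  (forall x, x \in expand p S L -> good eos S zpre t.+1 x) /\
  uniq (map (dz zpre) (expand p S L)).
Proof.
move=> Hg Hu.
have E : forall x v, x \in L -> dz zpre (rcons x.1 v, x.2 + ln (topk_dist p S x.1 v)) = rcons (dz zpre x) v.
  move=> x v Hx; have [E1 _ _] := Hg x Hx.
  by rewrite {1}/dz /= E1 rcons_cat drop_size_cat.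
split.
  move=> y /allpairsPdep [x [v [Hx Hv ->]]]; have [E1 E2 E3] := Hg x Hx.
  rewrite /good E //= size_rcons E2; split=> //.
    by rewrite -rcons_cat -E1.
  by apply: node_rcons => //; rewrite -E1 -mem_enum.
rewrite /expand map_allpairs; apply: allpairs_uniq_dep.
- exact: map_uniq Hu.
- by move=> x _; apply: enum_uniq.
move=> q1 q2 /allpairsPdep [x1 [v1 [Hx1 Hv1 ->]]] /allpairsPdep [x2 [v2 [Hx2 Hv2 ->]]] /=.
rewrite !E // => /eqP; rewrite eqseq_rcons => /andP [/eqP H1 /eqP H2].
have H := @uniq_map_inj _ _ _ _ _ _ Hu Hx1 Hx2 H1.
by subst.
Qed.

Lemma dz_rcons (V : finType) (R : Type) (eos : V) S zpre t (x : seq V * R) v r :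
  good eos S zpre t x -> dz zpre ((rcons x.1 v, r) : seq V * R) = rcons (dz zpre x) v.
Proof. by case=> E1 _ _; rewrite {1}/dz /= E1 rcons_cat drop_size_cat. Qed.

Lemma stepL (V : finType) (R : realType) (eos : V) S B sel zpre t (c : seq (seq V * R)) :
  is_beam_sel B sel ->
  (forall x, x \in c -> good eos S zpre t x) -> uniq (map (dz zpre) c) ->
  let l := sel [seq x <- c | ~~ ends_eos eos x.1] in
  [/\ {subset l <= c}, (forall x, x \in l -> good eos S zpre t x) & uniq (map (dz zpre) l)].
Proof.
move=> HB Hg Hu l.
have Hf : uniq [seq x <- c | ~~ ends_eos eos x.1] by apply: filter_uniq; exact: map_uniq Hu.
have [U Sub _ _] := HB _ Hf.
have Sub' : {subset l <= c} by move=> x /Sub; rewrite mem_filter => /andP [].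
split => //; first by move=> x /Sub'; apply: Hg.
rewrite map_inj_in_uniq // => x y /Sub' Hx /Sub' Hy.
exact: (@uniq_map_inj _ _ _ _ _ _ Hu Hx Hy).
Qed.

Lemma kcbs_inv (V : finType) (R : realType) (eos : V) p S B sel zpre t :
  is_beam_sel B sel ->
  (forall x, x \in @kcbs_L V R eos p S sel zpre t -> good eos S zpre t x) /\
  uniq (map (dz zpre) (@kcbs_L V R eos p S sel zpre t)).
Proof.
move=> HB; elim: t => [|t [IH1 IH2]].
  split => //=; move=> x; rewrite inE => /eqP->.
  by rewrite /good /dz /= drop_size cats0.
have [C1 C2] := @stepC _ _ _ p _ _ _ _ IH1 IH2.
by have [_ L1 L2] := @stepL _ _ _ _ _ _ _ _ _ HB C1 C2.
Qed.

Lemma kcbs_invC (V : finType) (R : realType) (eos : V) p S B sel zpre t :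
  is_beam_sel B sel ->
  [/\ (forall x, x \in @kcbs_C V R eos p S sel zpre t.+1 -> good eos S zpre t.+1 x),
      uniq (map (dz zpre) (@kcbs_C V R eos p S sel zpre t.+1)) &
      {subset @kcbs_L V R eos p S sel zpre t.+1 <= @kcbs_C V R eos p S sel zpre t.+1}].
Proof.
move=> HB; have [IH1 IH2] := @kcbs_inv _ _ eos p S _ sel zpre t HB.
have [C1 C2] := @stepC _ _ _ p _ _ _ _ IH1 IH2.
by have [L0 _ _] := @stepL _ _ _ _ _ _ _ _ _ HB C1 C2.
Qed.

Set Implicit Arguments. Unset Strict Implicit.

Lemma M1 (V : finType) (R : realType) (eos : V) p S B sel zpre t w :
  is_beam_sel B sel ->
  w \in map (dz zpre) (@kcbs_C V R eos p S sel zpre t.+1) ->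
  [/\ take t w \in map (dz zpre) (@kcbs_L V R eos p S sel zpre t), size w = t.+1
    & is_node eos S zpre w].
Proof.
move=> HB /mapP [y Hy ->].
have [G _ _] := @kcbs_invC _ _ eos p S _ sel zpre t HB.
have [_ E2 E3] := G y Hy; split => //.
have [GL _] := @kcbs_inv _ _ eos p S _ sel zpre t HB.
move: Hy; rewrite /kcbs_C /= => /allpairsPdep [x [v [Hx Hv ->]]].
have Gx := GL x Hx; rewrite (@dz_rcons _ _ _ _ _ _ _ _ _ Gx) -cats1 take_size_cat; last by case: Gx.
exact: map_f.
Qed.

Lemma M2 (V : finType) (R : realType) (eos : V) p S B sel zpre t u :
  is_beam_sel B sel -> is_node eos S zpre u -> size u = t.+1 ->
  take t u \in map (dz zpre) (@kcbs_L V R eos p S sel zpre t) ->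
  u \in map (dz zpre) (@kcbs_C V R eos p S sel zpre t.+1).
Proof.
move=> HB Hu Hs /mapP [x Hx Ex].
have [GL _] := @kcbs_inv _ _ eos p S _ sel zpre t HB.
have Gx := GL x Hx; have [Eu Hv] := @node_last _ _ _ _ _ _ Hu Hs.
apply/mapP; exists (rcons x.1 (nth eos u t), x.2 + ln (topk_dist p S x.1 (nth eos u t))).
  rewrite /kcbs_C /=; apply/allpairsPdep; exists x, (nth eos u t); split => //.
  by rewrite mem_enum; case: Gx => -> _ _; rewrite -Ex.
by rewrite (@dz_rcons _ _ _ _ _ _ _ _ _ Gx) -Ex -Eu.
Qed.

Lemma M3 (V : finType) (R : realType) (eos : V) p S B sel zpre t :
  is_beam_sel B sel ->
  {subset map (dz zpre) (@kcbs_L V R eos p S sel zpre t.+1) <=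
          map (dz zpre) (@kcbs_C V R eos p S sel zpre t.+1)}.
Proof.
move=> HB w /mapP [x Hx ->]; apply: map_f.
by have [_ _ Sub] := @kcbs_invC _ _ eos p S _ sel zpre t HB; apply: Sub.
Qed.

Lemma M4 (V : finType) (R : realType) (eos : V) p S B sel zpre t w :
  is_beam_sel B sel ->
  (w \in [seq drop (size zpre) x.1 | x <- @kcbs_C V R eos p S sel zpre t.+1
                 & x \notin @kcbs_L V R eos p S sel zpre t.+1]) =
  (w \in map (dz zpre) (@kcbs_C V R eos p S sel zpre t.+1)) &&
  (w \notin map (dz zpre) (@kcbs_L V R eos p S sel zpre t.+1)).
Proof.
move=> HB; have [_ U Sub] := @kcbs_invC _ _ eos p S _ sel zpre t HB.
apply/idP/idP.
  case/mapP => x; rewrite mem_filter => /andP [Hn Hx] ->.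
  rewrite (map_f (dz zpre) Hx) /=; apply/mapP => [[y Hy E]].
  have Exy := @uniq_map_inj _ _ _ _ _ _ U Hx (Sub _ Hy) E.
  by move: Hn; rewrite Exy Hy.
case/andP => /mapP [x Hx ->] Hn; apply/mapP; exists x => //.
rewrite mem_filter Hx andbT; apply/negP => Hl; apply: (negP Hn); exact: map_f.
Qed.

Lemma Mdown (V : finType) (R : realType) (eos : V) p S B sel zpre d t w :
  is_beam_sel B sel ->
  w \in map (dz zpre) (@kcbs_C V R eos p S sel zpre (t + d).+1) ->
  take t w \in map (dz zpre) (@kcbs_L V R eos p S sel zpre t).
Proof.
move=> HB; elim: d w => [|d IH] w; first by rewrite addn0 => /(M1 HB) [].
move=> Hw; rewrite addnS in Hw; have [H1 _ _] := M1 HB Hw.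
have := IH _ (M3 HB H1); rewrite take_takel //.
exact: leqW (leq_addr d t).
Qed.

Lemma uniq_flatten_sizes (T : eqType) (g : nat -> seq (seq T)) (s : seq nat) :
  uniq s -> (forall t, t \in s -> uniq (g t) /\ forall w, w \in g t -> size w = t) ->
  uniq (flatten (map g s)).
Proof.
elim: s => [|a s IH] //= /andP [Ha Hs] H.
rewrite cat_uniq (proj1 (H a (mem_head _ _))) IH ?andbT; last first.
  by move=> t Ht; apply: H; rewrite inE Ht orbT.
  done.
rewrite /=; apply/hasPn => w /flattenP [l /mapP [b Hb ->] Hw]; apply/negP => Hwa.
have := (proj2 (H a (mem_head _ _))) _ Hwa.
rewrite ((proj2 (H b _)) _ Hw) ?inE ?Hb ?orbT // => Eba.
by move: Ha; rewrite -Eba Hb.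
Qed.

Lemma count_prefix_uniq (T : eqType) (s : seq (seq T)) t u :
  uniq s -> (forall w, w \in s -> size w = t) ->
  count (fun w => prefix w u) s = (take t u \in s).
Proof.
move=> Hu Hs; rewrite -count_uniq_mem //; apply: eq_in_count => w Hw /=.
by rewrite prefixE (Hs w Hw) eq_sym.
Qed.

Lemma bool_tele (c l : bool) : (l -> c) -> ((c && ~~ l) + l = c)%N.
Proof. by case: c; case: l => // /(_ isT). Qed.

Lemma part2 (V : finType) (R : realType) (eos : V) p S B sel zpre T :
  is_beam_sel B sel -> (1 <= T)%N ->
  is_frontier eos S zpre T (@kcbs_F V R eos p S sel zpre T ++ @kcbs_Rprune V R eos p S sel zpre T).
Proof.
move=> HB; case: T => [|T'] // _.
pose Lc t := map (dz zpre) (@kcbs_L V R eos p S sel zpre t).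
pose Cc t := map (dz zpre) (@kcbs_C V R eos p S sel zpre t).
pose Rc t := [seq drop (size zpre) x.1 | x <- @kcbs_C V R eos p S sel zpre t
                 & x \notin @kcbs_L V R eos p S sel zpre t].
have -> : @kcbs_F V R eos p S sel zpre T'.+1 = Cc T'.+1 by [].
have -> : @kcbs_Rprune V R eos p S sel zpre T'.+1 = flatten (map Rc (iota 1 T')) by [].
have HRc : forall t, uniq (Rc t.+1) /\ forall w, w \in Rc t.+1 -> size w = t.+1.
  move=> t; have [_ U _] := @kcbs_invC _ _ eos p S _ sel zpre t HB; split.
    exact: subseq_uniq (map_subseq _ (filter_subseq _ _)) U.
  by move=> w; rewrite /Rc (M4 _ _ _ _ _ _ HB) => /andP [/(M1 HB) [_ Hs _] _].
have HR : forall w, w \in flatten (map Rc (iota 1 T')) -> exists t,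
    [/\ (t < T')%N, w \in Cc t.+1, w \notin Lc t.+1, size w = t.+1 & is_node eos S zpre w].
  move=> w /flattenP [l /mapP [t Ht ->] Hw]; move: Ht; rewrite mem_iota add1n.
  case: t Hw => [|t] // Hw /andP [_ Ht].
  rewrite /Rc (M4 _ _ _ _ _ _ HB) in Hw; case/andP: Hw => Hc Hl.
  have [_ Hs Hn] := M1 HB Hc; exists t; split => //.
have HF : forall w, w \in Cc T'.+1 -> size w = T'.+1 /\ is_node eos S zpre w.
  by move=> w /(M1 HB) [_ Hs Hn].
have UF : uniq (Cc T'.+1) by have [_ U _] := @kcbs_invC _ _ eos p S _ sel zpre T' HB.
split.
- rewrite cat_uniq; apply/and3P; split => //.
  + apply/hasPn => w /HR [t [Ht _ _ Hs _]]; apply/negP => /HF [Hs' _].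
    have : t.+1 = T'.+1 by rewrite -Hs -Hs'.
    by case => E; rewrite E ltnn in Ht.
  + apply: uniq_flatten_sizes; first exact: iota_uniq.
    by move=> t; rewrite mem_iota; case: t => [|t] // _; apply: HRc.
- move=> w; rewrite mem_cat => /orP [/HF [Hs Hn] | /HR [t [Ht _ _ Hs Hn]]]; split => //;
    rewrite Hs //; exact: ltnW.
- move=> w1 w2 H1 H2 [Hp Hne].
  move: Hp; rewrite prefixE => /eqP Ht.
  have Hsz : (size w1 < size w2)%N.
    case: (ltnP (size w1) (size w2)) => // Hge.
    by rewrite take_oversize // in Ht; rewrite Ht eqxx in Hne.
  have [t2 [Hc2 Hs2 Ht2]] : exists t2, [/\ w2 \in Cc t2.+1, size w2 = t2.+1 & (t2 <= T')%N].
    move: H2; rewrite mem_cat => /orP [/[dup] Hc /HF [Hs _]|/HR [t [Ht' Hc _ Hs _]]].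
      by exists T'.
    by exists t; split => //; exact: ltnW.
  have [t1 [_ Hc1 Hl1 Hs1 _]] : exists t,
      [/\ (t < T')%N, w1 \in Cc t.+1, w1 \notin Lc t.+1, size w1 = t.+1 & is_node eos S zpre w1].
    move: H1; rewrite mem_cat => /orP [/HF [Hs _]|/HR //].
    by move: Hsz; rewrite Hs Hs2 ltnS leqNgt ltnS Ht2.
  have E : t2 = (t1.+1 + (t2 - t1.+1))%N.
    by rewrite subnKC //; move: Hsz; rewrite Hs1 Hs2.
  rewrite E in Hc2; have := Mdown HB Hc2.
  by rewrite -Hs1 Ht Hs1 => H; move: Hl1; rewrite /Lc H.
- move=> u Hu Hs; rewrite count_cat count_flatten.
  rewrite (@count_prefix_uniq _ _ T'.+1) //; last by move=> w /HF [].
  rewrite -{1}Hs take_size -map_comp.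
  have Htel : forall n, (n <= T')%N ->
      (sumn [seq nat_of_bool (take t u \in Rc t) | t <- iota 1 n] + (take n u \in Lc n))%N = 1%N.
    elim => [|n IH] Hn.
      by rewrite /= /Lc /= /dz /= drop_size take0 inE eqxx.
    have -> : iota 1 n.+1 = iota 1 (n + 1) by rewrite addn1.
    rewrite iotaD add1n.
    rewrite map_cat sumn_cat /= addn0 -addnA.
    have Ec : (take n.+1 u \in Cc n.+1) = (take n u \in Lc n).
      have Hsn : size (take n.+1 u) = n.+1 by rewrite size_takel // Hs ltnS ltnW.
      apply/idP/idP.
        by move/(M1 HB) => [+ _ _]; rewrite take_takel.
      move=> H; apply: (M2 HB) => //; first exact: node_take.
      by rewrite take_takel.
    rewrite /Rc (M4 _ _ _ _ _ _ HB) -/(Cc _) -/(Lc _) Ec bool_tele; first exact: IH (ltnW Hn).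
    by move=> H; rewrite -Ec; apply: (M3 HB).
  rewrite -[RHS](Htel T' (leqnn _)).
  rewrite addnC; congr (_ + _)%N.
    congr sumn; apply/eq_in_map => t; rewrite mem_iota add1n; case: t => [|t] // /andP [_ Ht] /=.
    have [U1 U2] := HRc t.
    by rewrite (count_prefix_uniq _ U1 U2).
  congr nat_of_bool; apply/idP/idP.
    by move/(M1 HB) => [].
  by move=> H; apply: (M2 HB).
Qed.

Unset Implicit Arguments.

Theorem lemma5 (V : finType) (R : realType) (eos : V)
  (p : seq V -> V -> R) (k : nat) (S : seq V -> {set V})
  (B : nat) (sel : seq (seq V * R) -> seq (seq V * R))
  (zpre : seq V) (T : nat) :
  is_lm p -> (1 <= k)%N -> is_topk_sel k p S -> is_beam_sel B sel -> (1 <= T)%N ->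
  (forall A : seq (seq V), is_frontier eos S zpre T A ->
     \sum_(w <- A) cont_prob eos p S zpre w = 1)
  /\
  (is_frontier eos S zpre T
     (kcbs_F eos p S sel zpre T ++ kcbs_Rprune eos p S sel zpre T)
   /\ \sum_(x <- kcbs_F eos p S sel zpre T) cont_prob eos p S zpre x
      + \sum_(u <- kcbs_Rprune eos p S sel zpre T) cont_prob eos p S zpre u = 1).
Proof.
move=> Hlm Hk Hsel HB HT.
have P1 : forall A : seq (seq V), is_frontier eos S zpre T A ->
    \sum_(w <- A) cont_prob eos p S zpre w = 1.
  by move=> A HA; apply: (@frontier_sum V R eos p k S zpre T A Hlm Hk Hsel HA).
have Hf := @part2 V R eos p S B sel zpre T HB HT.
by split => //; split => //; rewrite -big_cat; apply: P1.
Qed.
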